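(* Let $n\ge 4$, $d\ge 2$, and $\mathbf h\in\mathbb{R}^{\binom{n+d-1}{d}}$ decomposed as $\mathbf h=(\mathbf h_0,\dots,\mathbf h_d)$. Suppose $\sum_{i=1}^{d-2}N(\mathbf h_i)+N(\mathbf h_d)=0$, $P(\mathbf h_d)=N(\mathbf h_{d-1})=2$, and $J_{n,d}\mathbf h\ge 0$. Then $R(J_{n,d}\mathbf h)\ge 3n-4$.
   Context: For a real vector $\mathbf x$, $P(\mathbf x)$, $N(\mathbf x)$, $R(\mathbf x)$ denote the numbers of positive, negative and nonzero components; inequalities are componentwise. $J_{m,j}$ is the matrix, with respect to the left lexicographic bases of degree-$j$ and degree-$(j+1)$ monomials in $m$ variables, of multiplication by the sum of the variables. If $\mathbf h$ is the coordinate vector of $A(x)=\sum_{j=0}^d x_1^{d-j}A_j(x_2,\dots,x_n)$ ($A_j$ homogeneous of degree $j$), then $\mathbf h_j$ is the coordinate vector of $A_j$ in the left lexicographic basis of degree-$j$ monomials in $x_2,\dots,x_n$. *)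

(* Defs.v *)
From HB Require Import structures.
From mathcomp Require Import all_boot all_order all_algebra.
From mathcomp Require Export mpoly.
Set Implicit Arguments. Unset Strict Implicit. Unset Printing Implicit Defensive.
Import Order.TTheory GRing.Theory Num.Theory.
Local Open Scope ring_scope.

(* Variables x_1,...,x_n are 'X_i for i : 'I_n, x_1 being index 0.
   A coordinate vector h in R^{C(n+d-1,d)} is identified with the
   coefficients of a homogeneous degree-d polynomial A; J_{n,d} h is the
   coefficient vector of (x_1+...+x_n) * A. *)

Definition tdeg (n : nat) (m : 'X_{1..n}) : nat :=
  (\sum_(i < n | val i != 0%N) m i)%N.

Definition sumvars (R : nzRingType) (n : nat) : {mpoly R[n]} := \sum_(i < n) 'X_i.

Definition is_homog_deg (R : nzRingType) (n d : nat) (A : {mpoly R[n]}) : Prop :=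
  forall m : 'X_{1..n}, mdeg m != d -> A@_m = 0.

(* N(h_j): number of negative entries of the block h_j (degree-d monomials of
   degree j in x_2..x_n, i.e. x_1^{d-j} * monomial of degree j) *)
Definition Nblock (R : realFieldType) (n d : nat) (A : {mpoly R[n]}) (j : nat) : nat :=
  #|[set m : 'X_{1..n < d.+1} | (mdeg m == d) && (tdeg m == j) && (A@_m < 0)]|.

Definition Pblock (R : realFieldType) (n d : nat) (A : {mpoly R[n]}) (j : nat) : nat :=
  #|[set m : 'X_{1..n < d.+1} | (mdeg m == d) && (tdeg m == j) && (0 < A@_m)]|.

Definition Jnonneg (R : realFieldType) (n : nat) (A : {mpoly R[n]}) : Prop :=
  forall m : 'X_{1..n}, 0 <= (sumvars R n * A)@_m.

Definition RJ (R : realFieldType) (n d : nat) (A : {mpoly R[n]}) : nat :=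
  #|[set m : 'X_{1..n < d.+2} | (mdeg m == d.+1) && ((sumvars R n * A)@_m != 0)]|.

(* Main.v *)
Require Import Defs.
From mathcomp Require Import all_boot all_order all_algebra.
From mathcomp Require Import mpoly.
From Stdlib Require Import Classical_Prop Lia.
From mathcomp Require Import zify.
Import Order.TTheory GRing.Theory Num.Theory.
Set Implicit Arguments. Unset Strict Implicit. Unset Printing Implicit Defensive.
Local Open Scope ring_scope.

Lemma mcoeffXiM (R : nzRingType) (n : nat) (p : {mpoly R[n]}) (i : 'I_n) (z : 'X_{1..n}) :
  ('X_i * p)@_z = if (U_(i) <= z)%MM then p@_(z - U_(i)) else 0.
Proof.
rewrite -commr_mpolyX; case: ifP => h.
  by rewrite -{1}(submK h) addmC mcoeffMX.
apply: memN_msupp_eq0; rewrite (perm_mem (msuppMX _ _)).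
apply/mapP => -[m' _ zE]; move: h; rewrite zE; by rewrite lem_addr.
Qed.

Lemma cE (R : nzRingType) (n : nat) (p : {mpoly R[n]}) (z : 'X_{1..n}) :
  (sumvars R n * p)@_z = \sum_(i < n) (if (U_(i) <= z)%MM then p@_(z - U_(i)) else 0).
Proof.
rewrite /sumvars mulr_suml raddf_sum /=.
by apply: eq_bigr => i _; rewrite mcoeffXiM.
Qed.

Lemma arA n f : (4 <= n -> f <= 1 -> n - 2 <= n.-1 - f)%N.
Proof. lia. Qed.
Lemma arB n : (4 <= n -> n - 2 <= 1 + (n.-1 - 2))%N.
Proof. lia. Qed.
Lemma arC n : (4 <= n -> 0 < n.-1 - 2)%N.
Proof. lia. Qed.

Lemma arD n a b e : (4 <= n -> (n.-1).*2 - 1 <= a -> n - 2 <= b -> 1 <= e -> 3 * n - 4 <= a + b + e)%N.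
Proof. rewrite -!muln2; lia. Qed.

Lemma cross_eq (n : nat) (a b : 'X_{1..n}) (k l k' l' : 'I_n) : a != b ->
  (a + U_(k))%MM = (b + U_(l))%MM -> (a + U_(k'))%MM = (b + U_(l'))%MM -> k = k'.
Proof.
move=> ab e1 e2.
have kl : k != l.
  apply/eqP => kl; move: e1; rewrite kl => /(congr1 (fun x => (x - U_(l))%MM)).
  by rewrite !addmK => abe; move: ab; rewrite abe eqxx.
move/mnmP: e1 => /(_ k); move/mnmP: e2 => /(_ k); rewrite !(mnmDE, mnm1E) eqxx.
have lk : (l == k) = false by rewrite eq_sym (negbTE kl).
rewrite lk.
case: (k' =P k) => // _; case: (l' =P k) => _ /=; lia.
Qed.

Lemma cardsU_disj (T : finType) (X Y : {set T}) : (forall x, x \in X -> x \in Y -> False) ->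
  #|X :|: Y| = (#|X| + #|Y|)%N.
Proof.
move=> h; rewrite cardsU; suff -> : X :&: Y = set0 by rewrite cards0 subn0.
by apply/setP => x; rewrite !inE; apply/negP => /andP[/h hx /hx].
Qed.

Lemma ar0 a b : (a + b = a -> b = 0)%N.
Proof. lia. Qed.
Lemma ar1 a b : (2 <= a -> a.-1 + b = a -> b = 1)%N.
Proof. lia. Qed.
Lemma ar2 a b : (2 <= a -> b + 1 = a -> b = a.-1)%N.
Proof. lia. Qed.
Lemma eq_sym_neq (T : eqType) (x y : T) : x != y -> y != x.
Proof. by rewrite eq_sym. Qed.

Ltac neqs := repeat match goal with
  | H : is_true (?a != ?b) |- context[?a == ?b] => rewrite (negbTE H)
  | H : is_true (?a != ?b) |- context[?b == ?a] => rewrite (negbTE (eq_sym_neq H))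
  end.

Lemma nS n : (n.+1 == n) = false. Proof. by elim: n. Qed.
Lemma nS' n : (n == n.+1) = false. Proof. by elim: n. Qed.
Ltac nsc := move=> /= /eqP; rewrite ?addn0 ?subn0 ?addn1 ?nS ?nS' //.

Section Main.
Variables (R : realFieldType) (n d : nat) (A : {mpoly R[n]}).
Variable i0 : 'I_n.
Implicit Types (z v w m : 'X_{1..n}) (k l : 'I_n).
Hypothesis hom : forall m, A@_m != 0 -> mdeg m = d.
Local Notation c z := ((sumvars R n * A)@_z).
Hypothesis Jn : forall z, 0 <= c z.

Definition term (z : 'X_{1..n}) (l : 'I_n) := if (U_(l) <= z)%MM then A@_(z - U_(l)) else 0.

Lemma cT (z : 'X_{1..n}) : c z = \sum_(l < n) term z l.
Proof. by rewrite cE. Qed.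

Lemma sumD2 (F : 'I_n -> R) (a b : 'I_n) : a != b ->
  \sum_(l < n) F l = F a + F b + \sum_(l < n | (l != a) && (l != b)) F l.
Proof.
move=> ab; rewrite (bigD1 a) //= (bigD1 b) /=; last by rewrite eq_sym.
rewrite addrA; congr (_ + _); apply: eq_bigl => l; by rewrite andbC.
Qed.

Lemma termU (v : 'X_{1..n}) (k : 'I_n) : term (v + U_(k)) k = A@_v.
Proof. by rewrite /term lep1mP mnmDE mnm1E eqxx addn1 /= addmK. Qed.

Lemma mdegU (v : 'X_{1..n}) (k : 'I_n) : mdeg (v + U_(k)) = (mdeg v).+1.
Proof. by rewrite mdegD mdeg1 addn1. Qed.

Lemma mdegBU (z : 'X_{1..n}) (l : 'I_n) : (U_(l) <= z)%MM -> mdeg z = (mdeg (z - U_(l))).+1.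
Proof. by move=> h; rewrite -{1}(submK h) mdegU. Qed.

Definition Bb (v : 'X_{1..n}) : bool := (v i0 == 1%N) && (A@_v != 0).

Lemma Bterm (z : 'X_{1..n}) (l : 'I_n) : z i0 = 1%N -> l != i0 -> term z l != 0 -> Bb (z - U_(l)).
Proof.
rewrite /term /Bb => z1 li; case: ifP => _; last by rewrite eqxx.
move=> nz; rewrite nz andbT mnmBE mnm1E.
by rewrite (negbTE li) z1.
Qed.


Variables n1 n2 m1 m2 : 'X_{1..n}.
Hypothesis Bn1 : Bb n1.
Hypothesis n12 : n1 != n2.
Hypothesis n1i0 : n1 i0 = 1%N.
Hypothesis n2i0 : n2 i0 = 1%N.
Hypothesis An1 : A@_n1 < 0.
Hypothesis An2 : A@_n2 < 0.
Hypothesis Nd1 : forall m, m i0 = 1%N -> A@_m < 0 -> m = n1 \/ m = n2.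
Hypothesis m12 : m1 != m2.
Hypothesis m1i0 : m1 i0 = 0%N.
Hypothesis m2i0 : m2 i0 = 0%N.
Hypothesis Am1 : 0 < A@_m1.
Hypothesis Am2 : 0 < A@_m2.
Hypothesis Pd : forall m, m i0 = 0%N -> A@_m != 0 -> m = m1 \/ m = m2.
Hypothesis Nd : forall m, m i0 = 0%N -> 0 <= A@_m.

Definition embB (m : 'X_{1..n}) : 'X_{1..n < d.+1} := insubd (@bm0 n d) m.

Lemma embBK' m : A@_m != 0 -> val (embB m) = m.
Proof.
move=> /hom hm; rewrite /embB insubdK //.
by rewrite unfold_in /= hm.
Qed.

Lemma embBK m : Bb m -> val (embB m) = m.
Proof. by move=> /andP[_ /embBK']. Qed.

Definition ub (k : 'I_n) : 'X_{1..n < d.+1} :=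
  [arg max_(v > embB n1 | Bb (val v)) (val v : 'X_{1..n}) k].
Definition u k := val (ub k).
Definition M k := u k k.

Lemma u_spec k : Bb (u k) /\ forall v, Bb v -> (v k <= M k)%N.
Proof.
rewrite /M /u /ub; case: arg_maxnP; first by rewrite embBK.
move=> w Bw wmax; split => // v Bv.
by have := wmax (embB v); rewrite embBK //; apply.
Qed.

Lemma Bu k : Bb (u k). Proof. by case: (u_spec k). Qed.
Lemma Mmax k v : Bb v -> (v k <= M k)%N. Proof. by case: (u_spec k) => _; apply. Qed.



Lemma Bi0 v : Bb v -> v i0 = 1%N.
Proof. by case/andP => /eqP. Qed.

Lemma BA v : Bb v -> A@_v != 0.
Proof. by case/andP. Qed.

Lemma termi0 z : (0 < z i0)%N -> term z i0 = A@_(z - U_(i0)).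
Proof. by rewrite /term lep1mP -lt0n => ->. Qed.

Lemma term0 z l : z i0 = 1%N -> l != i0 -> ~~ Bb (z - U_(l)) -> term z l = 0.
Proof. by move=> z1 li nB; apply/eqP; apply: contraNT nB => /(Bterm z1 li). Qed.

Lemma VL k v : k != i0 -> Bb v -> v k = M k ->
  c (v + U_(k))%MM = A@_(v + U_(k) - U_(i0)) + A@_v.
Proof.
move=> ki Bv vk; have v1 := Bi0 Bv.
have z1 : (v + U_(k))%MM i0 = 1%N by rewrite mnmDE mnm1E (negbTE ki) addn0.
rewrite cT (@sumD2 _ i0 k (eq_sym_neq ki)) termi0 ?z1 // termU big1 ?addr0 //.
move=> l /andP[li lk]; apply: term0 => //; apply/negP => /(Mmax k).
by rewrite !(mnmBE, mnmDE, mnm1E) eqxx (negbTE lk) vk addn1 subn0 ltnn.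
Qed.


Lemma ui0 k : u k i0 = 1%N. Proof. exact: Bi0 (Bu k). Qed.

Definition p k := (u k + U_(k) - U_(i0))%MM.

Lemma p_coord k t : t != i0 -> p k t = (u k t + (k == t))%N.
Proof. by move=> ti; rewrite /p !(mnmBE, mnmDE, mnm1E) (negbTE (eq_sym_neq ti)) subn0. Qed.

Lemma pi0 k : k != i0 -> p k i0 = 0%N.
Proof. by move=> ki; rewrite /p !(mnmBE, mnmDE, mnm1E) (negbTE ki) eqxx ui0. Qed.

Lemma p_inj k l : k != i0 -> p k = p l -> k = l.
Proof.
move=> ki /mnmP /(_ k); rewrite !p_coord // eqxx.
case: (l =P k) => // /eqP lk; rewrite addn0 => h.
by have := Mmax k (Bu l); rewrite -h /M addn1 ltnn.
Qed.

Lemma vert_inj k l : (u k + U_(k))%MM = (u l + U_(l))%MM -> k = l.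
Proof.
move=> /mnmP /(_ k); rewrite !(mnmDE, mnm1E) eqxx.
case: (l =P k) => // /eqP lk; rewrite addn0 => h.
by have := Mmax k (Bu l); rewrite -h /M addn1 ltnn.
Qed.

Lemma cancel_p v k : v i0 = 1%N -> (v + U_(k) - U_(i0))%MM = p k -> v = u k.
Proof.
move=> v1 /mnmP h; apply/mnmP => t; move: (h t); rewrite /p !(mnmBE, mnmDE, mnm1E).
case: (i0 =P t) => [<- _|_]; first by rewrite v1 ui0.
rewrite !subn0; exact: addIn.
Qed.

Lemma fail_P k : k != i0 -> c (u k + U_(k))%MM = 0 ->
  A@_(p k) = - A@_(u k) /\ (p k = m1 \/ p k = m2).
Proof.
move=> ki; rewrite (VL ki (Bu k)) // => /eqP; rewrite addr_eq0 => /eqP h.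
split => //; apply: Pd; first exact: pi0.
by rewrite /p h oppr_eq0 (BA (Bu k)).
Qed.


Definition fails k := k != i0 /\ c (u k + U_(k))%MM = 0.

Lemma Pd2 a b m : fails a -> fails b -> a != b -> m i0 = 0%N -> A@_m != 0 -> m = p a \/ m = p b.
Proof.
move=> [ai fa] [bi fb] ab m0 nz.
have [_ ha] := fail_P ai fa; have [_ hb] := fail_P bi fb.
have pab : p a != p b by apply/eqP => /(p_inj ai); apply/eqP.
have := Pd m0 nz.
case: ha => ha; case: hb => hb; rewrite ha hb in pab *;
  try by rewrite eqxx in pab.
- by case=> ->; [left|right].
- by case=> ->; [right|left].
Qed.

Lemma Aneg a : fails a -> A@_(u a) < 0.
Proof.
move=> [ai fa]; have [h _] := fail_P ai fa.
have := Nd (pi0 ai); rewrite h oppr_ge0 le_eqVlt => /orP[|//].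
by rewrite (negbTE (BA (Bu a))).
Qed.

Definition ok a b z := [/\ z i0 = 1%N, mdeg z = d.+1, c z != 0 &
  forall t, t != i0 -> t != a -> t != b -> (z t <= M t)%N].

Lemma okC a b z : ok a b z -> ok b a z.
Proof. by case=> h1 h2 h3 h4; split => // t t1 t2 t3; apply: h4. Qed.

Lemma step1 a b v : fails a -> fails b -> a != b -> Bb v -> v a = M a -> v != u a ->
  ok a b (v + U_(a))%MM.
Proof.
move=> fa fb ab Bv va vu; have [ai _] := fa; have [bi _] := fb.
have v1 := Bi0 Bv.
have P0 : A@_(v + U_(a) - U_(i0))%MM = 0.
  apply/eqP; apply: contraT => nz.
  have z0 : (v + U_(a) - U_(i0))%MM i0 = 0%N.
    by rewrite !(mnmBE, mnmDE, mnm1E) (negbTE ai) eqxx v1.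
  case: (Pd2 fa fb ab z0 nz) => /eqP.
    by move/eqP/(cancel_p v1)/eqP; rewrite (negbTE vu).
  move/eqP/mnmP/(_ b); rewrite p_coord // !(mnmBE, mnmDE, mnm1E).
  rewrite (negbTE ab) eqxx (negbTE (eq_sym_neq bi)) subn0 addn0 => h.
  by have := Mmax b Bv; rewrite h /M addn1 ltnn.
split.
- by rewrite !(mnmDE, mnm1E) (negbTE ai) v1.
- by rewrite mdegU (hom (BA Bv)).
- by rewrite (VL ai Bv va) P0 add0r (BA Bv).
- move=> t _ ta _; rewrite !(mnmDE, mnm1E) (negbTE (eq_sym_neq ta)) addn0.
  exact: Mmax.
Qed.


Lemma step2 i j k : fails i -> fails j -> i != j -> k != i0 -> k != i -> k != j ->
  (forall v, Bb v -> v i = M i -> v = u i) ->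
  (forall v, Bb v -> v j = M j -> v = u j) -> u i != u j.
Proof.
move=> fi fj ij ki0 ki kj Ui Uj; have [ii0 _] := fi; have [ji0 _] := fj.
apply/eqP => g.
have := Jn (u i + U_(k))%MM; rewrite leNgt => /negP; apply.
have z1 : (u i + U_(k))%MM i0 = 1%N by rewrite !(mnmDE, mnm1E) (negbTE ki0) ui0.
rewrite cT (@sumD2 _ i0 k (eq_sym_neq ki0)) termi0 ?z1 // termU.
have -> : A@_(u i + U_(k) - U_(i0))%MM = 0.
  apply/eqP; apply: contraT => nz.
  have z0 : (u i + U_(k) - U_(i0))%MM i0 = 0%N.
    by rewrite !(mnmBE, mnmDE, mnm1E) (negbTE ki0) eqxx ui0.
  case: (Pd2 fi fj ij z0 nz) => /mnmP /(_ k); rewrite p_coord //;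
    rewrite !(mnmBE, mnmDE, mnm1E) eqxx (negbTE (eq_sym_neq ki0)) subn0.
    by rewrite (negbTE (eq_sym_neq ki)) addn0 addn1 => /eqP; rewrite eqn_leq ltnn.
  by rewrite (negbTE (eq_sym_neq kj)) addn0 addn1 g => /eqP; rewrite eqn_leq ltnn.
rewrite big1 ?add0r ?addr0; first exact: Aneg.
move=> l /andP[li0 lk]; apply: term0 => //; apply/negP => Bw.
have wk : ((u i + U_(k) - U_(l))%MM k = (u i k).+1)%N.
  by rewrite !(mnmBE, mnmDE, mnm1E) eqxx (negbTE lk) subn0 addn1.
case: (eqVneq l i) => [li|li].
  have h : (u i + U_(k) - U_(l))%MM = u j.
    apply: Uj Bw _; rewrite !(mnmBE, mnmDE, mnm1E) (negbTE kj) li (negbTE ij).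
    by rewrite addn0 subn0 /M -g.
  by move: wk; rewrite h -g; apply: n_Sn.
have h : (u i + U_(k) - U_(l))%MM = u i.
  apply: Ui Bw _; rewrite !(mnmBE, mnmDE, mnm1E) (negbTE ki) (negbTE li).
  by rewrite addn0 subn0.
by move: wk; rewrite h; apply: n_Sn.
Qed.


Lemma Neg2 i j w : fails i -> fails j -> u i != u j -> w i0 = 1%N -> A@_w < 0 ->
  w = u i \/ w = u j.
Proof.
move=> fi fj uij w1 wn.
have hi := Nd1 (ui0 i) (Aneg fi); have hj := Nd1 (ui0 j) (Aneg fj).
have := Nd1 w1 wn.
case: hi => hi; case: hj => hj; rewrite hi hj in uij *;
  try by rewrite eqxx in uij.
- by case=> ->; [left|right].
- by case=> ->; [right|left].
Qed.

Lemma step3 i j k : fails i -> fails j -> i != j -> k != i0 -> k != i -> k != j ->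
  (forall v, Bb v -> v i = M i -> v = u i) ->
  (forall v, Bb v -> v j = M j -> v = u j) -> u i != u j -> exists z, ok i j z.
Proof.
move=> fi fj ij ki0 ki kj Ui Uj uij; have [ii0 _] := fi; have [ji0 _] := fj.
have Bi := Bu i; have Bj := Bu j.
have ui1 := ui0 i.
set z1 := (u i + U_(j))%MM.
have z11 : z1 i0 = 1%N by rewrite !(mnmDE, mnm1E); neqs; rewrite ui1.
case: (eqVneq (c z1) 0) => cz1; last first.
  exists z1; split => //.
  - by rewrite mdegU (hom (BA Bi)).
  - move=> t _ _ tj; rewrite !(mnmDE, mnm1E); neqs; rewrite addn0.
    exact: Mmax.
have T0 : term z1 i0 = 0.
  rewrite termi0 ?z11 //; apply/eqP; apply: contraT => nz.
  have z0 : (z1 - U_(i0))%MM i0 = 0%N by rewrite !(mnmBE, mnm1E) eqxx z11.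
  case: (Pd2 fi fj ij z0 nz) => [|/(cancel_p ui1)/eqP]; last by rewrite (negbTE uij).
  move/mnmP/(_ i); rewrite p_coord // !(mnmBE, mnmDE, mnm1E) eqxx; neqs.
  by move=> /=; rewrite addn0 subn0 addn1 => /n_Sn.
have Tj : term z1 j = A@_(u i) by rewrite termU.
have Trest : \sum_(l < n | (l != i0) && (l != j)) term z1 l = term z1 i.
  rewrite (bigD1 i) /=; last by rewrite ii0 ij.
  rewrite big1 ?addr0 // => l /andP[/andP[li0 lj] li].
  apply: term0 => //; apply/negP => Bw.
  have h : (z1 - U_(l))%MM = u i.
    apply: Ui Bw _; rewrite !(mnmBE, mnmDE, mnm1E); neqs.
    by rewrite addn0 subn0.
  move/mnmP: h => /(_ j); rewrite !(mnmBE, mnmDE, mnm1E) eqxx; neqs.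
  by rewrite subn0 addn1 => /esym /n_Sn.
move: cz1; rewrite cT (@sumD2 _ i0 j (eq_sym_neq ji0)) T0 Tj Trest add0r.
rewrite /term lep1mP; case: ifP => [lei|_]; last first.
  by rewrite addr0 => /eqP; rewrite (negbTE (BA Bi)).
set nu := (z1 - U_(i))%MM => /eqP; rewrite addrC addr_eq0 => /eqP Anu.
have nupos : 0 < A@_nu by rewrite Anu oppr_gt0 Aneg.
have nu1 : nu i0 = 1%N by rewrite /nu !(mnmBE, mnm1E); neqs; rewrite subn0.
have Bnu : Bb nu by rewrite /Bb nu1 eqxx /= lt0r_neq0.
have nuk : nu k = u i k.
  by rewrite /nu !(mnmBE, mnmDE, mnm1E); neqs; rewrite addn0 subn0.
have nuj : nu j = (u i j).+1.
  by rewrite /nu !(mnmBE, mnmDE, mnm1E) eqxx; neqs; rewrite addn1 subn0.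
have nut : forall t, t != i -> t != j -> nu t = u i t.
  by move=> t ti tj; rewrite /nu !(mnmBE, mnmDE, mnm1E); neqs; rewrite addn0 subn0.
clearbody nu.
have hk : (u i k < M k)%N.
  rewrite ltn_neqAle Mmax // andbT; apply/eqP => uik.
  have := Jn (u i + U_(k))%MM; rewrite (VL ki0 Bi uik).
  have -> : A@_(u i + U_(k) - U_(i0))%MM = 0.
    apply/eqP; apply: contraT => nz.
    have z0 : (u i + U_(k) - U_(i0))%MM i0 = 0%N.
      by rewrite !(mnmBE, mnmDE, mnm1E) eqxx; neqs; rewrite ui1.
    case: (Pd2 fi fj ij z0 nz) => /mnmP h.
      move: (h k); rewrite p_coord // !(mnmBE, mnmDE, mnm1E) eqxx; neqs.
      by nsc.
    have : u j = u i.
      apply: Ui Bj _; move: (h i); rewrite p_coord // !(mnmBE, mnmDE, mnm1E); neqs.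
      by move=> /=; rewrite subn0 !addn0 => <-.
    by move/eqP; rewrite eq_sym (negbTE uij).
  by rewrite add0r leNgt Aneg.
set z2 := (nu + U_(k))%MM.
exists z2; split.
- by rewrite /z2 !(mnmDE, mnm1E); neqs; rewrite ?nu1 ?ui1.
- by rewrite mdegU (hom (BA Bnu)).
- rewrite lt0r_neq0 // cT (@sumD2 _ i0 k (eq_sym_neq ki0)) termi0; last first.
    by rewrite /z2 !(mnmDE, mnm1E); neqs; rewrite ?nu1 ?ui1.
  rewrite termU -addrA addrC -addrA; apply: (lt_le_trans nupos); rewrite lerDl.
  apply: addr_ge0; last first.
    apply: Nd; rewrite /z2 !(mnmBE, mnmDE, mnm1E) eqxx; neqs; rewrite ?nu1 ?ui1.
    by [].
  apply: sumr_ge0 => l /andP[li0 lk]; rewrite /term; case: ifP => // lel.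
  rewrite leNgt; apply/negP => wn.
  have w1 : (z2 - U_(l))%MM i0 = 1%N.
    by rewrite /z2 !(mnmBE, mnmDE, mnm1E); neqs; rewrite ?nu1 ?ui1.
  case: (Neg2 fi fj uij w1 wn) => /mnmP h.
    move: (h k); rewrite /z2 !(mnmBE, mnmDE, mnm1E) eqxx; neqs.
    by rewrite nuk addn1 subn0 => /esym /n_Sn.
  case: (eqVneq l j) => [lj|lj].
    have : u i = u j.
      apply: Uj Bi _; move: (h j); rewrite /z2 !(mnmBE, mnmDE, mnm1E) lj eqxx; neqs.
      by rewrite addn0 nuj subn1.
    by move/eqP; rewrite (negbTE uij).
  have : nu = u j.
    apply: Uj Bnu _; move: (h j); rewrite /z2 !(mnmBE, mnmDE, mnm1E); neqs.
    by rewrite addn0 subn0.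
  by move=> e; move: nupos; rewrite e ltNge ltW // Aneg.
- move=> t t0 ti tj; rewrite /z2 !(mnmDE, mnm1E) nut //.
  case: (eqVneq k t) => [<-|kt]; first by rewrite addn1.
  by rewrite addn0; apply: Mmax.
Qed.


Lemma extra i j k : fails i -> fails j -> i != j -> k != i0 -> k != i -> k != j ->
  exists z, ok i j z.
Proof.
move=> fi fj ij ki0 ki kj.
case: (classic (exists v, [/\ Bb v, v i = M i & v != u i])) => [[v [Bv vi vu]]|Ni].
  by exists (v + U_(i))%MM; apply: step1.
case: (classic (exists v, [/\ Bb v, v j = M j & v != u j])) => [[v [Bv vj vu]]|Nj].
  by exists (v + U_(j))%MM; apply: okC; apply: step1 => //; rewrite eq_sym.
have Ui : forall v, Bb v -> v i = M i -> v = u i.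
  move=> v Bv vi; case: (eqVneq v (u i)) => // vu; case: Ni; by exists v.
have Uj : forall v, Bb v -> v j = M j -> v = u j.
  move=> v Bv vj; case: (eqVneq v (u j)) => // vu; case: Nj; by exists v.
exact: (step3 fi fj ij ki0 ki kj Ui Uj (step2 fi fj ij ki0 ki kj Ui Uj)).
Qed.


Definition emb2 (m : 'X_{1..n}) : 'X_{1..n < d.+2} := insubd (@bm0 n d.+1) m.

Lemma emb2K m : mdeg m = d.+1 -> val (emb2 m) = m.
Proof. by move=> hm; rewrite /emb2 insubdK // unfold_in /= hm. Qed.

Definition RJset := [set z : 'X_{1..n < d.+2} | (mdeg (val z) == d.+1) && (c (val z) != 0)].

Lemma emb2_in m : mdeg m = d.+1 -> c m != 0 -> emb2 m \in RJset.
Proof. by move=> hm cm; rewrite inE emb2K // hm eqxx cm. Qed.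

Lemma mdeg_vert k : mdeg (u k + U_(k))%MM = d.+1.
Proof. by rewrite mdegU (hom (BA (Bu k))). Qed.

Definition Vset (G : {set 'I_n}) := [set emb2 (u k + U_(k))%MM | k in G].

Lemma Vset_props (G : {set 'I_n}) :
  (forall k, k \in G -> k != i0 /\ c (u k + U_(k))%MM != 0) ->
  [/\ Vset G \subset RJset, {in Vset G, forall y : 'X_{1..n < d.+2}, (y : 'X_{1..n}) i0 = 1%N} & #|Vset G| = #|G| ].
Proof.
move=> hG; split.
- apply/subsetP => z /imsetP [k kG ->]; apply: emb2_in; [exact: mdeg_vert| by case: (hG k kG)].
- move=> z /imsetP [k kG ->]; rewrite emb2K ?mdeg_vert // mnmDE mnm1E (Bi0 (Bu k)).
  by case: (hG k kG) => ki _; rewrite (negbTE ki).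
- apply: card_in_imset => k l _ _ /(congr1 val); rewrite !emb2K ?mdeg_vert //.
  exact: vert_inj.
Qed.


Lemma fail_ij i j k : fails i -> fails j -> i != j -> fails k -> k = i \/ k = j.
Proof.
move=> fi fj ij [ki ck]; have [h _] := fail_P ki ck.
have nz : A@_(p k) != 0 by rewrite h oppr_eq0 (BA (Bu k)).
by case: (Pd2 fi fj ij (pi0 ki) nz) => /(p_inj ki); [left|right].
Qed.

Lemma piece2 : (4 <= n)%N -> exists S : {set 'X_{1..n < d.+2}},
  [/\ S \subset RJset, {in S, forall y : 'X_{1..n < d.+2}, (y : 'X_{1..n}) i0 = 1%N}
    & (n - 2 <= #|S|)%N].
Proof.
move=> n4.
pose K := [set~ i0].
have cK : #|K| = n.-1 by rewrite cardsC1 card_ord.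
pose F := [set k in K | c (u k + U_(k))%MM == 0].
have FK : F \subset K by apply/subsetP => k; rewrite inE => /andP[].
case: (leqP #|F| 1) => [F1|F2].
  pose G := K :\: F.
  have hG : forall k, k \in G -> k != i0 /\ c (u k + U_(k))%MM != 0.
    move=> k; rewrite !inE => /andP[nF ki]; split => //.
    by apply/eqP => ck; move: nF; rewrite ki ck eqxx.
  have [h1 h2 h3] := Vset_props hG.
  exists (Vset G); split => //; rewrite h3 cardsD cK (setIidPr FK).
  exact: arA.
have [i [j [iF jF ij]]] := card_gt1P F2.
have fi : fails i by move: iF; rewrite !inE => /andP[a /eqP b]; split.
have fj : fails j by move: jF; rewrite !inE => /andP[a /eqP b]; split.
pose G := K :\: [set i; j].
have iK : i \in K by move: iF; rewrite inE => /andP[].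
have jK : j \in K by move: jF; rewrite inE => /andP[].
have cG : #|G| = (n.-1 - 2)%N.
  rewrite cardsD cK; congr (_ - _)%N.
  have -> : K :&: [set i; j] = [set i; j].
    apply/setIidPr; apply/subsetP => x; rewrite !inE => /orP[] /eqP ->.
      by case: fi.
    by case: fj.
  by rewrite cards2 ij.
have hG : forall k, k \in G -> k != i0 /\ c (u k + U_(k))%MM != 0.
  move=> k; rewrite !inE negb_or => /andP[/andP[ki kj] k0]; split => //.
  apply/eqP => ck.
  by case: (fail_ij fi fj ij (conj k0 ck)) => /eqP; rewrite ?(negbTE ki) ?(negbTE kj).
have [k kG] : exists k, k \in G by apply/card_gt0P; rewrite cG arC.
have := kG; rewrite !inE negb_or => /andP[/andP[ki kj] k0].
have [z [z1 zd cz zb]] := extra fi fj ij k0 ki kj.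
have [h1 h2 h3] := Vset_props hG.
exists (emb2 z |: Vset G); split.
- by rewrite subUset sub1set emb2_in.
- move=> y; rewrite !inE => /orP[/eqP ->|]; first by rewrite emb2K.
  exact: h2.
- rewrite cardsU1 h3 cG.
  have -> : emb2 z \notin Vset G.
    apply/negP => /imsetP [l lG] /(congr1 val); rewrite !emb2K ?mdeg_vert // => e.
    move: lG; rewrite !inE negb_or => /andP[/andP[li lj] l0].
    have := zb l l0 li lj; rewrite e mnmDE mnm1E eqxx addn1 /M ltnn.
    by [].
  exact: arB.
Qed.


Lemma cpos1 m k : m i0 = 0%N -> 0 < A@_m -> k != i0 -> 0 < c (m + U_(k))%MM.
Proof.
move=> m0 Am ki; rewrite cT (bigD1 k) //= termU.
apply: (lt_le_trans Am); rewrite lerDl; apply: sumr_ge0 => l _.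
rewrite /term; case: ifP => // _; apply: Nd.
rewrite !(mnmBE, mnmDE, mnm1E) m0; neqs; by case: (l == i0).
Qed.

Lemma piece1 : exists S : {set 'X_{1..n < d.+2}},
  [/\ S \subset RJset, {in S, forall y : 'X_{1..n < d.+2}, (y : 'X_{1..n}) i0 = 0%N}
    & ((n.-1).*2 - 1 <= #|S|)%N].
Proof.
pose K := [set~ i0].
have cK : #|K| = n.-1 by rewrite cardsC1 card_ord.
have dm1 : mdeg m1 = d by apply: hom; rewrite lt0r_neq0.
have dm2 : mdeg m2 = d by apply: hom; rewrite lt0r_neq0.
pose X1 := [set emb2 (m1 + U_(k))%MM | k in K].
pose X2 := [set emb2 (m2 + U_(k))%MM | k in K].
have inj (m : 'X_{1..n}) : mdeg m = d -> {in K &, injective (fun k => emb2 (m + U_(k))%MM)}.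
  move=> dm k l _ _ /(congr1 val); rewrite !emb2K ?mdegU ?dm //.
  move/mnmP/(_ k); rewrite !(mnmDE, mnm1E) eqxx.
  by case: (l =P k) => // _; nsc.
have c1 : #|X1| = n.-1 by rewrite card_in_imset ?cK //; apply: inj.
have c2 : #|X2| = n.-1 by rewrite card_in_imset ?cK //; apply: inj.
have cI : (#|X1 :&: X2| <= 1)%N.
  apply/card_le1_eqP => x y; rewrite !inE => /andP[/imsetP[k kK ->] /imsetP[l lK]].
  move=> /(congr1 val); rewrite !emb2K ?mdegU ?dm1 ?dm2 // => e1.
  case/andP => /imsetP[k' k'K ->] /imsetP[l' l'K] /(congr1 val).
  rewrite !emb2K ?mdegU ?dm1 ?dm2 // => e2.
  by rewrite (cross_eq m12 e1 e2).
exists (X1 :|: X2); split.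
- rewrite subUset; apply/andP; split; apply/subsetP => x /imsetP [k kK ->];
    (apply: emb2_in; first by rewrite mdegU ?dm1 ?dm2);
    apply: lt0r_neq0; apply: cpos1 => //; by move: kK; rewrite /K !inE.
- move=> x; rewrite inE => /orP[] /imsetP [k kK ->];
    rewrite emb2K ?mdegU ?dm1 ?dm2 // mnmDE mnm1E ?m1i0 ?m2i0;
    by move: kK; rewrite /K !inE => /negbTE ->.
- rewrite cardsU c1 c2 -addnn; move: cI; set t := #|_|; move=> cI.
  rewrite (leq_trans _ (leq_sub2l _ cI)) //.
Qed.


Lemma piece3 : exists S : {set 'X_{1..n < d.+2}},
  [/\ S \subset RJset, {in S, forall y : 'X_{1..n < d.+2}, (1 < (y : 'X_{1..n}) i0)%N}
    & (1 <= #|S|)%N].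
Proof.
have An1' : A@_(val (embB n1)) != 0 by rewrite embBK // (BA Bn1).
pose wb := [arg max_(v > embB n1 | A@_(val v) != 0) (val v : 'X_{1..n}) i0].
have [w Aw wmax] : exists2 w, A@_w != 0 & forall v, A@_v != 0 -> (v i0 <= w i0)%N.
  case: (@arg_maxnP _ (embB n1) (fun v : 'X_{1..n < d.+1} => A@_(val v) != 0)
    (fun v : 'X_{1..n < d.+1} => (val v : 'X_{1..n}) i0) An1') => x Ax xmax; exists (val x) => // v Av.
  by have := xmax (embB v); rewrite embBK' //; apply.
have w1 : (1 <= w i0)%N by rewrite -n1i0 wmax // (BA Bn1).
have dw : mdeg (w + U_(i0))%MM = d.+1 by rewrite mdegU (hom Aw).
have cw : c (w + U_(i0))%MM = A@_w.
  rewrite cT (bigD1 i0) //= termU big1 ?addr0 // => l li.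
  rewrite /term; case: ifP => // _; apply/eqP; apply: contraT => nz.
  have := wmax _ nz; rewrite !(mnmBE, mnmDE, mnm1E) eqxx; neqs.
  by rewrite subn0 addn1 ltnn.
exists [set emb2 (w + U_(i0))%MM]; split.
- by rewrite sub1set emb2_in // cw.
- move=> y; rewrite inE => /eqP ->; rewrite emb2K // mnmDE mnm1E eqxx addn1.
  by [].
- by rewrite cards1.
Qed.

Lemma final : (4 <= n)%N -> (3 * n - 4 <= #|RJset|)%N.
Proof.
move=> n4.
have [S1 [s1 h1 c1]] := piece1.
have [S2 [s2 h2 c2]] := piece2 n4.
have [S3 [s3 h3 c3]] := piece3.
have e12 : #|S1 :|: S2| = (#|S1| + #|S2|)%N.
  by apply: cardsU_disj => x /h1 e /h2; rewrite e.
have e123 : #|(S1 :|: S2) :|: S3| = (#|S1| + #|S2| + #|S3|)%N.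
  rewrite -e12; apply: cardsU_disj => x; rewrite inE => /orP[/h1 e | /h2 e] /h3;
    by rewrite e.
apply: leq_trans (arD n4 c1 c2 c3) _; rewrite -e123.
by apply: subset_leq_card; rewrite !subUset s1 s2 s3.
Qed.

End Main.

Lemma tdegE (n : nat) (i0 : 'I_n) (m : 'X_{1..n}) : val i0 = 0%N ->
  (tdeg m + m i0)%N = mdeg m.
Proof.
move=> v0; rewrite /tdeg mdegE [in RHS](bigD1 i0) //= addnC; congr (_ + _)%N.
by apply: eq_bigl => i; rewrite -val_eqE v0.
Qed.

Unset Implicit Arguments.

Theorem proposition5p2 (R : realFieldType) (n d : nat) (A : {mpoly R[n]}) :
  (4 <= n)%N -> (2 <= d)%N ->
  is_homog_deg d A ->
  ((\sum_(1 <= i < d.-1) Nblock d A i) + Nblock d A d = 0)%N ->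
  Pblock d A d = 2%N ->
  Nblock d A d.-1 = 2%N ->
  Jnonneg A ->
  (3 * n - 4 <= RJ d A)%N.
Proof.
move=> n4 d2 hom0 hN hP hN1 hJ.
have n0 : (0 < n)%N by apply: leq_trans n4.
pose i0 : 'I_n := Ordinal n0.
have tE : forall m : 'X_{1..n}, (tdeg m + m i0)%N = mdeg m by move=> m; apply: tdegE.
have hom : forall m : 'X_{1..n}, A@_m != 0 -> mdeg m = d.
  move=> m nz; case: (eqVneq (mdeg m) d) => // /hom0 h.
  by rewrite h eqxx in nz.
have bnd : forall m : 'X_{1..n}, mdeg m = d -> (mdeg m < d.+1)%N by move=> m ->.
pose bm (m : 'X_{1..n}) : 'X_{1..n < d.+1} := insubd (@bm0 n d) m.
have bmK : forall m : 'X_{1..n}, mdeg m = d -> val (bm m) = m.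
  by move=> m hm; rewrite /bm insubdK // unfold_in /= hm.
have hNd : Nblock d A d = 0%N by move/eqP: hN; rewrite addn_eq0 => /andP[_ /eqP].
have Nd : forall m : 'X_{1..n}, m i0 = 0%N -> 0 <= A@_m.
  move=> m m0; case: (eqVneq (A@_m) 0) => [->//|nz].
  rewrite leNgt; apply/negP => neg.
  move/eqP: hNd; rewrite cards_eq0 => /eqP S0.
  have : bm m \in [set m0 : 'X_{1..n < d.+1} | (mdeg m0 == d) && (tdeg m0 == d) && (A@_m0 < 0)].
    have td : tdeg m = d by rewrite -(hom _ nz) -(tE m) m0 addn0.
    by rewrite inE bmK ?(hom _ nz) // td eqxx neg.
  by rewrite S0 inE.
move/eqP/cards2P: hP => [x [y [xy Sxy]]].
have inP : forall m : 'X_{1..n < d.+1}, m \in [set x; y] ->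
    [/\ mdeg m = d, (m : 'X_{1..n}) i0 = 0%N & 0 < A@_m].
  move=> m; rewrite -Sxy inE => /andP[/andP[/eqP md /eqP td] pos]; split => //.
  by move: (tE m); rewrite td md; apply: ar0.
have [dx x0 Ax] := inP x (set21 _ _).
have [dy y0 Ay] := inP y (set22 _ _).
move/eqP/cards2P: hN1 => [a [b [ab Sab]]].
have inN : forall m : 'X_{1..n < d.+1}, m \in [set a; b] ->
    [/\ mdeg m = d, (m : 'X_{1..n}) i0 = 1%N & A@_m < 0].
  move=> m; rewrite -Sab inE => /andP[/andP[/eqP md /eqP td] neg]; split => //.
  by move: (tE m); rewrite td md; apply: ar1.
have [da a1 Aa] := inN a (set21 _ _).
apply: (@final R n d A i0 hom hJ (val a) (val b) (val x) (val y)) => //.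
- by rewrite /Bb a1 eqxx /= ltr0_neq0.
- move=> m m1 mneg.
  have md : mdeg m = d by apply: hom; rewrite ltr0_neq0.
  have : bm m \in [set a; b].
    rewrite -Sab inE bmK // md eqxx mneg andbT /=.
    by apply/eqP; move: (tE m); rewrite m1 md; apply: ar2.
  by rewrite !inE => /orP[] /eqP <-; rewrite bmK //; [left|right].
- move=> m m0 nz.
  have md : mdeg m = d by apply: hom.
  have pos : 0 < A@_m by rewrite lt_def nz Nd.
  have : bm m \in [set x; y].
    rewrite -Sxy inE bmK // md eqxx pos andbT /=.
    by apply/eqP; move: (tE m); rewrite m0 md addn0.
  by rewrite !inE => /orP[] /eqP <-; rewrite bmK //; [left|right].
Qed.
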